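(* Let $i$ be an integer. Let $\Phi(z)=\sum_{n\ge0}c_nz^n$, where $c_n$ is the number of unbounded Deutsch paths of $n$ steps from $(0,0)$ to $(n,i)$; there is no restriction on the levels visited. Let $v=v(z)$ be the power series with $v(0)=0$ satisfying $z=\frac{v}{1+v+v^2}$. Then $$\Phi(z)=\frac{(1+v)^{-i-2}\,v\,(1+v+v^2)}{1-v}\quad\text{for } i<0,$$ $$\Phi(z)=\frac{v^{i}(1+v+v^2)}{(1-v)(1+v)^{i+2}}\quad\text{for } i\ge0.$$
   Context: A Deutsch path is a lattice path whose steps are up-steps $(1,1)$ and down-steps $(1,-k)$ for any integer $k\ge1$. The series $v$ is given explicitly by $v=\frac{1-z-\sqrt{1-2z-3z^2}}{2z}$. *)

(* Defs.v *)
From HB Require Import structures.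
From mathcomp Require Import all_boot all_order all_algebra.
Set Implicit Arguments. Unset Strict Implicit. Unset Printing Implicit Defensive.
Import Order.TTheory GRing.Theory Num.Theory.
Local Open Scope ring_scope.

(** A step of a Deutsch path, recorded by its vertical displacement:
    an up-step (1,1) has displacement 1, a down-step (1,-k) has -k, k >= 1. *)
Definition deutsch_step (s : int) : bool := (s == 1) || (s <= -1).

Definition deutsch_path (n : nat) (i : int) (p : seq int) : bool :=
  [&& size p == n, all deutsch_step p & \sum_(s <- p) s == i].

Definition deutsch_count (n : nat) (i : int) (c : nat) : Prop :=
  exists L : seq (seq int),
    [/\ uniq L, size L = c & forall p, (p \in L) = deutsch_path n i p].

Definition fps := nat -> rat.

Definition fps_const (a : rat) : fps := fun n => if n == 0%N then a else 0.
Definition fps_one : fps := fps_const 1.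
Definition fps_X : fps := fun n => if n == 1%N then 1 else 0.
Definition fps_add (a b : fps) : fps := fun n => a n + b n.
Definition fps_sub (a b : fps) : fps := fun n => a n - b n.
Definition fps_mul (a b : fps) : fps :=
  fun n => \sum_(k < n.+1) a k * b (n - k)%N.
Definition fps_pow (a : fps) (k : nat) : fps := iter k (fps_mul a) fps_one.

(** Multiplicative inverse of a series with nonzero constant term:
    b_0 = 1/a_0, b_n = -(1/a_0) * sum_{k=1}^{n} a_k b_{n-k}.
    [fps_inv_aux a n] is the list [b_0; ...; b_n]. *)
Fixpoint fps_inv_aux (a : fps) (n : nat) : seq rat :=
  match n with
  | 0%N => [:: (a 0%N)^-1]
  | m.+1 => let s := fps_inv_aux a m in
            rcons s (- (a 0%N)^-1 * \sum_(k < m.+1) a k.+1 * nth 0 s (m - k)%N)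
  end.
Definition fps_inv (a : fps) : fps := fun n => nth 0 (fps_inv_aux a n) n.

Definition fps_zpow (a : fps) (k : int) : fps :=
  match k with
  | Posz m => fps_pow a m
  | Negz m => fps_inv (fps_pow a m.+1)
  end.

Definition fps_div (a b : fps) : fps := fps_mul a (fps_inv b).

(* Main.v *)
Require Import Defs.
From HB Require Import structures.
From mathcomp Require Import all_boot all_order all_algebra.
From mathcomp Require Import boolp.
From mathcomp Require Import ring zify.
Import Order.TTheory GRing.Theory Num.Theory.
Local Open Scope ring_scope.

Definition PS : Type := nat -> rat.
HB.instance Definition _ := Choice.on PS.

Definition s0 : PS := fun _ => 0.
Definition sopp (a : PS) : PS := fun n => - a n.
Definition sadd (a b : PS) : PS := fps_add a b.

Lemma saddA : associative sadd.
Proof. by move=> a b c; apply: funext => n; rewrite /sadd /fps_add addrA. Qed.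
Lemma saddC : commutative sadd.
Proof. by move=> a b; apply: funext => n; rewrite /sadd /fps_add addrC. Qed.
Lemma sadd0 : left_id s0 sadd.
Proof. by move=> a; apply: funext => n; rewrite /sadd /fps_add /s0 add0r. Qed.
Lemma saddN : left_inverse s0 sopp sadd.
Proof. by move=> a; apply: funext => n; rewrite /sadd /fps_add /s0 /sopp addNr. Qed.

HB.instance Definition _ := GRing.isZmodule.Build PS saddA saddC sadd0 saddN.

Definition Tr (n : nat) (a : PS) : {poly rat} := \poly_(k < n.+1) a k.

Lemma Tr_coef n a : forall j, (j <= n)%N -> (Tr n a)`_j = a j.
Proof. by move=> j h; rewrite /Tr coef_poly ltnS h. Qed.

Lemma agree_mul n (P Q : {poly rat}) (a b : PS) :
  (forall j, (j <= n)%N -> P`_j = a j) -> (forall j, (j <= n)%N -> Q`_j = b j) ->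
  forall j, (j <= n)%N -> (P * Q)`_j = fps_mul a b j.
Proof.
move=> hP hQ j hj; rewrite coefM /fps_mul; apply: eq_bigr => k _.
have hk : (k <= j)%N by rewrite -ltnS ltn_ord.
rewrite hP ?hQ //; first by rewrite (leq_trans (leq_subr _ _) hj).
exact: leq_trans hk hj.
Qed.

Arguments agree_mul {n P Q a b}.

Lemma smulA : associative fps_mul.
Proof.
move=> a b c; apply: funext => n.
have h1 := agree_mul (Tr_coef n b) (Tr_coef n c).
have h2 := agree_mul (Tr_coef n a) h1.
have h3 := agree_mul (Tr_coef n a) (Tr_coef n b).
have h4 := agree_mul h3 (Tr_coef n c).
by rewrite -h2 // -h4 // mulrA.
Qed.

Lemma smulC : commutative fps_mul.
Proof.
move=> a b; apply: funext => n.
have h1 := agree_mul (Tr_coef n a) (Tr_coef n b).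
have h2 := agree_mul (Tr_coef n b) (Tr_coef n a).
by rewrite -h1 // -h2 // mulrC.
Qed.

Lemma smul1 : left_id fps_one fps_mul.
Proof.
move=> a; apply: funext => n.
have h0 : forall j, (j <= n)%N -> (1 : {poly rat})`_j = fps_one j.
  by move=> j _; rewrite coef1 /fps_one /fps_const; case: (j == 0%N).
have h1 := agree_mul h0 (Tr_coef n a).
by rewrite -h1 // mul1r Tr_coef.
Qed.

Lemma smulDl : left_distributive fps_mul sadd.
Proof.
move=> a b c; apply: funext => n.
rewrite /fps_mul /sadd /fps_add -big_split /=; apply: eq_bigr => k _; by rewrite mulrDl.
Qed.

Lemma sone_neq0 : fps_one != s0.
Proof.
apply/eqP => /(congr1 (fun f => f 0%N)); rewrite /fps_one /fps_const /s0 /=.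
by move/eqP; rewrite oner_eq0.
Qed.

HB.instance Definition _ := GRing.Zmodule_isComNzRing.Build PS smulA smulC smul1 smulDl sone_neq0.

Lemma mul0c (a b : PS) : (a * b) 0%N = a 0%N * b 0%N.
Proof. by rewrite /GRing.mul /= /fps_mul big_ord_recl big_ord0 addr0 subn0. Qed.

Lemma size_aux a n : size (fps_inv_aux a n) = n.+1.
Proof. by elim: n => //= n IH; rewrite size_rcons IH. Qed.

Lemma aux_pref a n k : (k <= n)%N -> nth 0 (fps_inv_aux a n) k = fps_inv a k.
Proof.
elim: n => [|n IH]; first by rewrite leqn0 => /eqP ->.
rewrite leq_eqVlt => /orP [/eqP -> //|hk].
by rewrite /= nth_rcons size_aux hk IH.
Qed.

Lemma inv_rec a m : fps_inv a m.+1 =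
  - (a 0%N)^-1 * \sum_(k < m.+1) a k.+1 * fps_inv a (m - k)%N.
Proof.
rewrite /fps_inv /= nth_rcons size_aux ltnn eqxx; congr (_ * _).
apply: eq_bigr => k _; by rewrite aux_pref // leq_subr.
Qed.

Lemma fps_invP (a : PS) : a 0%N != 0 -> fps_mul a (fps_inv a) = fps_one.
Proof.
move=> ha; apply: funext => n; case: n => [|m].
  by rewrite /fps_mul big_ord_recl big_ord0 addr0 /fps_inv /= divff.
rewrite /fps_mul big_ord_recl subn0 inv_rec mulrA mulrN divff // mulN1r.
rewrite /fps_one /fps_const /=.
rewrite [X in - _ + X](_ : _ = \sum_(k < m.+1) a k.+1 * fps_inv a (m - k)%N) ?addNr //.

Qed.

Definition sunit : pred PS := fun a => a 0%N != 0.
Definition sinv (a : PS) : PS := if a 0%N != 0 then fps_inv a else a.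

Lemma smulV : {in sunit, left_inverse 1 sinv *%R}.
Proof.
move=> a ha; have ha' : a 0%N != 0 by exact: ha.
rewrite /sinv ha'.
by rewrite mulrC; apply: fps_invP.
Qed.

Lemma sunitP (x y : PS) : y * x = 1 -> sunit x.
Proof.
move=> /(congr1 (fun f : PS => f 0%N)); rewrite mul0c => h.
apply/eqP => hx; move: h; rewrite hx mulr0 => /esym/eqP.
by rewrite /GRing.one /= /fps_one /fps_const /= oner_eq0.
Qed.

Lemma sinv_out : {in [predC sunit], sinv =1 id}.
Proof. move=> a; rewrite inE /= => h; have h' : (a 0%N != 0) = false by apply/negbTE. by rewrite /sinv h'. Qed.

HB.instance Definition _ := GRing.ComNzRing_hasMulInverse.Build PS smulV sunitP sinv_out.

Lemma unitS (a : PS) : (a \is a GRing.unit) = (a 0%N != 0).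
Proof. by []. Qed.

Lemma invS (a : PS) : a 0%N != 0 -> a^-1 = fps_inv a.
Proof. by move=> h; rewrite /GRing.inv /= /sinv h. Qed.

Lemma powS (a : PS) k : fps_pow a k = a ^+ k.
Proof. elim: k => [//|k IH]; by rewrite exprS -IH. Qed.

Lemma expr0c (a : PS) k : (a ^+ k) 0%N = (a 0%N) ^+ k.
Proof. elim: k => [//|k IH]; by rewrite !exprS mul0c IH. Qed.

Definition uu (v : PS) : PS := 1 + v.
Definition CC (v : PS) : PS := (1 + v + v ^+ 2) * (1 - v)^-1 * (uu v)^-1.
Definition ww (v : PS) : PS := v * (uu v)^-1.
Definition GG (v : PS) (j : int) : PS :=
  if 0 <= j then CC v * ww v ^+ `|j|%N else CC v * uu v ^+ `|j|%N.
Definition FF (v : PS) (j : int) : PS := GG v j - GG v (j + 1).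

Lemma GG_pos v (m : nat) : GG v m%:Z = CC v * ww v ^+ m.
Proof. by rewrite /GG. Qed.

Lemma GG_neg v (m : nat) : GG v (- m%:Z) = CC v * uu v ^+ m.
Proof. by case: m => [|m]; rewrite /GG //= !expr0. Qed.

Lemma one0 : (1 : PS) 0%N = 1.
Proof. by []. Qed.

Lemma addc (a b : PS) n : (a + b) n = a n + b n.
Proof. by []. Qed.
Lemma oppc (a : PS) n : (- a) n = - a n.
Proof. by []. Qed.
Lemma subc (a b : PS) n : (a - b) n = a n - b n.
Proof. by []. Qed.
Lemma zeroc n : (0 : PS) n = 0.
Proof. by []. Qed.

Lemma uu_unit (v : PS) : v 0%N = 0 -> uu v \is a GRing.unit.
Proof. by move=> h; rewrite unitS /uu addc h addr0 one0 oner_eq0. Qed.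

Lemma omv_unit (v : PS) : v 0%N = 0 -> (1 - v) \is a GRing.unit.
Proof. by move=> h; rewrite unitS subc h subr0 one0 oner_eq0. Qed.

Definition Xs : PS := fps_X.

Lemma key (v : PS) (i : int) : v 0%N = 0 -> Xs * (1 + v + v ^+ 2) = v ->
  FF v i = (if i == 0 then 1 else 0) + Xs * FF v (i - 1) + Xs * GG v (i + 1).
Proof.
move=> hv hz.
have hu := uu_unit v hv; have hc := omv_unit v hv.
have e1 : (uu v)^-1 * (1 + v) = 1 by rewrite mulVr.
have e2 : (1 - v)^-1 * (1 - v) = 1 by rewrite mulVr.
rewrite /FF; case: (intP i) => [|m|m].
- rewrite eqxx (_ : 0 + 1 = 1%N%:Z) // (_ : 0 - 1 = - 1%N%:Z) //.
  rewrite (_ : - 1%N%:Z + 1 = 0%N%:Z) //.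
  rewrite GG_neg !GG_pos /CC /ww /uu !expr0 !expr1 !mulr1.
  set ui := (1 + v)^-1; set ci := (1 - v)^-1; set X := Xs.
  have hu2 : (1 + v) ^+ 2 * (1 - v) \is a GRing.unit by rewrite unitrM unitrX.
  apply: (mulIr hu2).
  transitivity ((1 + v + v ^+ 2) * (ci * (1 - v)) * (ui * (1 + v)) *
                 ((1 + v) - v * (ui * (1 + v)))); first by ring.
  rewrite e1 e2.
  transitivity ((1 - v) * (1 + v) ^+ 2 + X * (1 + v + v ^+ 2) * (ci * (1 - v)) *
     ((ui * (1 + v)) * v * (1 + v) + (ui * (1 + v)) ^+ 2 * v)); last by ring.
  rewrite e1 e2 hz; ring.
- have h0 : (m.+1%:Z == 0) = false by apply/eqP; lia.
  rewrite h0.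
  rewrite (_ : m.+1%:Z - 1 = m%:Z); last by lia.
  rewrite (_ : m.+1%:Z + 1 = m.+2%:Z); last by lia.
  rewrite !GG_pos add0r.
  set w := ww v; set C := CC v; set X := Xs.
  have core : w - w * w = X * (1 - w + w * w).
    have hu2 : (1 + v) ^+ 2 \is a GRing.unit by rewrite unitrX.
    apply: (mulIr hu2); rewrite /w /ww /uu.
    set ui := (1 + v)^-1.
    transitivity (v * (1 + v) * (ui * (1 + v)) - v ^+ 2 * (ui * (1 + v)) ^+ 2); first by ring.
    transitivity (X * ((1 + v) ^+ 2 - v * (1 + v) * (ui * (1 + v)) + v ^+ 2 * (ui * (1 + v)) ^+ 2)); last by ring.
    rewrite e1 (_ : (1 + v) ^+ 2 - v * (1 + v) * 1 + v ^+ 2 * 1 ^+ 2 = 1 + v + v ^+ 2); last by ring.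
    rewrite hz; ring.
  rewrite !exprS.
  transitivity (C * w ^+ m * (w - w * w)); first by ring.
  rewrite core addn1 exprS; ring.
- have h0 : (- m.+1%:Z == 0) = false by apply/eqP; lia.
  rewrite h0.
  rewrite (_ : - m.+1%:Z - 1 = - m.+2%:Z); last by lia.
  rewrite (_ : - m.+2%:Z + 1 = - m.+1%:Z); last by lia.
  rewrite (_ : - m.+1%:Z + 1 = - m%:Z); last by lia.
  rewrite !GG_neg add0r.
  set u := uu v; set C := CC v; set X := Xs.
  have core : u - 1 = X * (u * u - u + 1).
    rewrite /u /uu (_ : (1 + v) * (1 + v) - (1 + v) + 1 = 1 + v + v ^+ 2); last by ring.
    rewrite hz; ring.
  rewrite !exprS.
  transitivity (C * u ^+ m * (u - 1)); first by ring.
  rewrite core; ring.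
Qed.

Definition negs (n : nat) (i : int) : seq int :=
  [seq - (k.+1)%:Z | k <- iota 0 `|n%:Z - i|%N].
Definition stepsL (n : nat) (i : int) : seq int := 1 :: negs n i.

Fixpoint Es (n : nat) (i : int) : seq (seq int) :=
  match n with
  | 0%N => if i == 0 then [:: [::]] else [::]
  | n'.+1 => flatten [seq [seq s :: p | p <- Es n' (i - s)] | s <- stepsL n' i]
  end.

Lemma mem_flat (ts : seq int) (E : int -> seq (seq int)) s p :
  (s :: p \in flatten [seq [seq t :: q | q <- E t] | t <- ts]) = (s \in ts) && (p \in E s).
Proof.
elim: ts => [//|t ts IH] /=; rewrite mem_cat IH in_cons.
have -> : (s :: p \in [seq t :: q | q <- E t]) = (s == t) && (p \in E t).
  apply/mapP/andP => [[q hq [-> ->]]|[/eqP -> hp]]; first by rewrite eqxx.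
  by exists p.
case: (s =P t) => [->|_] /=; last by [].
by case: (p \in E t); rewrite ?orbT ?andbF.
Qed.

Lemma nil_flat (ts : seq int) (E : int -> seq (seq int)) :
  ([::] \in flatten [seq [seq t :: q | q <- E t] | t <- ts]) = false.
Proof.
elim: ts => [//|t ts IH] /=; rewrite mem_cat IH orbF.
by apply/mapP => [[q _ ]].
Qed.

Lemma uniq_flat (ts : seq int) (E : int -> seq (seq int)) :
  uniq ts -> (forall t, uniq (E t)) ->
  uniq (flatten [seq [seq t :: q | q <- E t] | t <- ts]).
Proof.
move=> hts hE; elim: ts hts => [//|t ts IH] /= /andP [ht hts].
rewrite cat_uniq IH // andbT map_inj_uniq ?hE //; last by move=> a b [].
apply/hasPn => x hx; apply/mapP => [[q hq hxq]].
by move: hx; rewrite hxq mem_flat (negbTE ht).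
Qed.

Lemma size_flat (ts : seq int) (E : int -> seq (seq int)) :
  size (flatten [seq [seq t :: q | q <- E t] | t <- ts]) = (\sum_(t <- ts) size (E t))%N.
Proof.
elim: ts => [|t ts IH] /=; first by rewrite big_nil.
by rewrite size_cat size_map IH big_cons.
Qed.

Lemma path_cons n i s p :
  deutsch_path n.+1 i (s :: p) = deutsch_step s && deutsch_path n (i - s) p.
Proof.
rewrite /deutsch_path /= big_cons eqSS.
have -> : (s + \sum_(x <- p) x == i) = (\sum_(x <- p) x == i - s).
  by apply/idP/idP => /eqP h; apply/eqP; lia.
by case: (size p == n); case: (deutsch_step s).
Qed.

Lemma path_le p : forall n j, deutsch_path n j p -> j <= n%:Z.
Proof.
elim: p => [|s p IH] n j.
  by rewrite /deutsch_path /= big_nil => /andP [/eqP <- /eqP <-].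
case: n => [|n]; first by rewrite /deutsch_path /=.
rewrite path_cons => /andP [hs /IH h].
move: hs; rewrite /deutsch_step => /orP [/eqP hs|hs]; lia.
Qed.

Lemma mem_Es n : forall i p, (p \in Es n i) = deutsch_path n i p.
Proof.
elim: n => [|n IH] i p.
  rewrite /= /deutsch_path; case: p => [|s p] /=.
    rewrite big_nil; case: (i =P 0) => [->|h] //=.
    by rewrite eq_sym; apply/esym/eqP => h'; apply: h.
  by case: ifP.
have E1 : Es n.+1 i = flatten [seq [seq s :: p | p <- Es n (i - s)] | s <- stepsL n i] by [].
case: p => [|s p]; first by rewrite E1 nil_flat /deutsch_path.
rewrite E1 mem_flat IH path_cons.
apply/andP/andP => [[hs hp]|[hs hp]]; split => //.
  move: hs; rewrite /stepsL in_cons => /orP [/eqP ->|] //.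
  by move=> /mapP [k _ ->]; rewrite /deutsch_step; apply/orP; right; lia.
rewrite /stepsL in_cons; apply/orP.
move: hs; rewrite /deutsch_step => /orP [->|hs]; first by left.
right; have hle := @path_le _ _ _ hp.
case: s hs hp hle => [s'|k] hs hp hle; first by lia.
apply/mapP; exists k; last by rewrite NegzE.
rewrite NegzE in hle; rewrite mem_iota /= -ltz_nat gez0_abs; lia.
Qed.

Lemma uniq_Es n : forall i, uniq (Es n i).
Proof.
elim: n => [|n IH] i; first by rewrite /=; case: ifP.
have E1 : Es n.+1 i = flatten [seq [seq s :: p | p <- Es n (i - s)] | s <- stepsL n i] by [].
rewrite E1; apply: uniq_flat => //.
rewrite /stepsL /= andbC map_inj_uniq ?iota_uniq /=.
  by apply/mapP => [[k _ h]]; lia.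
by move=> a b h; lia.
Qed.

Lemma size_Es n i : size (Es n.+1 i) =
  (size (Es n (i - 1)) + \sum_(k <- iota 0 `|n%:Z - i|%N) size (Es n (i + 1 + k%:Z)))%N.
Proof.
have E1 : Es n.+1 i = flatten [seq [seq s :: p | p <- Es n (i - s)] | s <- stepsL n i] by [].
rewrite E1 size_flat /stepsL big_cons /negs big_map; congr (_ + _)%N.
by apply: eq_bigr => k _; congr (size (Es n _)); lia.
Qed.

Lemma mulc (a b : PS) n : (a * b) n = \sum_(k < n.+1) a k * b (n - k)%N.
Proof. by []. Qed.

Lemma XmulS (H : PS) n : (Xs * H) n.+1 = H n.
Proof.
rewrite mulc big_ord_recl big_ord_recl /= big1 ?addr0.
  by rewrite mul0r add0r mul1r /bump /= subSS subn0.
by move=> k _; rewrite /Xs /fps_X /bump /= mul0r.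
Qed.

Lemma Xmul0 (H : PS) : (Xs * H) 0%N = 0.
Proof. by rewrite mul0c /Xs /fps_X /= mul0r. Qed.

Lemma sumc (I : Type) (s : seq I) (H : I -> PS) n :
  (\sum_(k <- s) H k) n = \sum_(k <- s) H k n.
Proof.
elim: s => [|k s IH]; first by rewrite !big_nil.
by rewrite !big_cons addc IH.
Qed.

Lemma valM (a b : PS) p r : (forall k, (k < p)%N -> a k = 0) ->
  (forall k, (k < r)%N -> b k = 0) -> forall k, (k < p + r)%N -> (a * b) k = 0.
Proof.
move=> ha hb k hk; rewrite mulc big1 // => j _.
have hj : (j <= k)%N by rewrite -ltnS ltn_ord.
case: (ltnP j p) => hjp; first by rewrite ha ?mul0r.
by rewrite hb ?mulr0 //; lia.
Qed.

Lemma valX (a : PS) m : a 0%N = 0 -> forall k, (k < m)%N -> (a ^+ m) k = 0.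
Proof.
move=> h0; elim: m => [//|m IH] k hk.
rewrite exprS; apply: (@valM _ _ 1%N m) => //.
by move=> j; rewrite ltnS leqn0 => /eqP ->.
Qed.

Lemma GG_van (v : PS) (j : int) n : v 0%N = 0 -> n%:Z < j -> GG v j n = 0.
Proof.
move=> hv hj; have hj0 : 0 <= j by lia.
rewrite /GG hj0; apply: (@valM _ _ 0%N `|j|%N) => //.
apply: valX; first by rewrite /ww mul0c hv mul0r.
by rewrite -ltz_nat gez0_abs.
Qed.

Lemma tele (v : PS) (j : int) K :
  GG v j = \sum_(k <- iota 0 K) FF v (j + k%:Z) + GG v (j + K%:Z).
Proof.
elim: K => [|K IH]; first by rewrite big_nil add0r addr0.
rewrite -addn1 iotaD big_cat big_seq1 /= IH -addrA; congr (_ + _).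
rewrite /FF add0n; rewrite (_ : j + (K + 1)%N%:Z = j + K%:Z + 1); last by lia.
by rewrite subrK.
Qed.

Lemma FF_rec (v : PS) (i : int) n K : v 0%N = 0 -> Xs * (1 + v + v ^+ 2) = v ->
  n%:Z < i + 1 + K%:Z ->
  FF v i n.+1 = FF v (i - 1) n + \sum_(k <- iota 0 K) FF v (i + 1 + k%:Z) n.
Proof.
move=> hv hz hK.
rewrite key // !addc !XmulS (tele v (i + 1) K) addc sumc GG_van // addr0.
by case: (i == 0); rewrite add0r.
Qed.

Lemma FF_0 (v : PS) (i : int) : v 0%N = 0 -> Xs * (1 + v + v ^+ 2) = v ->
  FF v i 0%N = (i == 0)%:R.
Proof.
move=> hv hz; rewrite key // !addc !Xmul0 !addr0.
by case: (i == 0).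
Qed.

Lemma main (v : PS) : v 0%N = 0 -> Xs * (1 + v + v ^+ 2) = v ->
  forall n i, FF v i n = (size (Es n i))%:R.
Proof.
move=> hv hz; elim=> [|n IH] i.
  by rewrite FF_0 //=; case: (i == 0).
rewrite size_Es natrD natr_sum (@FF_rec v i n `|n%:Z - i|%N) //; last first.
  case: (lerP 0 (n%:Z - i)) => h; first by rewrite gez0_abs; lia.
  lia.
rewrite IH; congr (_ + _); apply: eq_bigr => k _; by rewrite IH.
Qed.

Lemma mulE (a b : PS) : fps_mul a b = a * b. Proof. by []. Qed.
Lemma addE (a b : PS) : fps_add a b = a + b. Proof. by []. Qed.
Lemma subE (a b : PS) : fps_sub a b = a - b. Proof. by []. Qed.
Lemma oneE : fps_one = (1 : PS). Proof. by []. Qed.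
Lemma divE (a b : PS) : b 0%N != 0 -> fps_div a b = a * b^-1.
Proof. by move=> h; rewrite /fps_div invS. Qed.
Lemma zposE (a : PS) k : fps_zpow a (Posz k) = a ^+ k.
Proof. by rewrite /fps_zpow powS. Qed.
Lemma znegE (a : PS) k : a 0%N != 0 -> fps_zpow a (Negz k) = (a ^+ k.+1)^-1.
Proof. by move=> h; rewrite /fps_zpow powS invS // expr0c expf_neq0. Qed.

Lemma eqS (a b : PS) : @eq PS a b -> @eq fps a b.
Proof. by []. Qed.

Theorem theorem8 (i : int) (c : nat -> nat) (v : fps) :
  (forall n : nat, deutsch_count n i (c n)) ->
  v 0%N = 0 ->
  fps_X = fps_div v (fps_add (fps_add fps_one v) (fps_pow v 2)) ->
  let Phi : fps := fun n => ((c n)%:R : rat) in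
  (i < 0 ->
     Phi = fps_div
             (fps_mul (fps_mul (fps_zpow (fps_add fps_one v) (- i - 2)) v)
                      (fps_add (fps_add fps_one v) (fps_pow v 2)))
             (fps_sub fps_one v)) /\
  (0 <= i ->
     Phi = fps_div
             (fps_mul (fps_zpow v i) (fps_add (fps_add fps_one v) (fps_pow v 2)))
             (fps_mul (fps_sub fps_one v) (fps_zpow (fps_add fps_one v) (i + 2)))).
Proof.
move=> hc hv hX Phi; change PS in v.
have hu := uu_unit v hv; have hcu := omv_unit v hv.
have hq0 : (1 + v + v ^+ 2 : PS) 0%N != 0.
  by rewrite !addc expr0c hv expr0n /=.
have hz : Xs * (1 + v + v ^+ 2) = v.
  rewrite /Xs; move: hX; rewrite !addE oneE powS divE // => ->.
  by rewrite -mulrA mulVr ?mulr1.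
have hPhi : Phi = FF v i.
  apply: funext => n; rewrite /Phi main //.
  have [L [hL hs hm]] := hc n.
  rewrite -hs; congr (_ %:R); apply: perm_size; apply: uniq_perm => //.
    exact: uniq_Es.
  by move=> p; rewrite hm mem_Es.
have e1 : (uu v)^-1 * (1 + v) = 1 by rewrite mulVr.
have e2 : (1 - v)^-1 * (1 - v) = 1 by rewrite mulVr.
rewrite hPhi; split => hi.
- case: i hc hPhi hi => [m|m] hc hPhi hi; first by lia.
  apply: eqS.
  rewrite /FF NegzE (_ : - m.+1%:Z + 1 = - m%:Z); last by lia.
  rewrite !GG_neg /CC !addE oneE subE !mulE powS divE; last by rewrite unitS in hcu.
  case: m hc hPhi hi => [|k] hc hPhi hi.
  + rewrite (_ : - Negz 0 - 2 = Negz 0) // znegE; last by rewrite addc hv addr0 one0 oner_eq0.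
    rewrite /uu !expr1 expr0; ring.
  + rewrite (_ : - Negz k.+1 - 2 = Posz k); last by rewrite NegzE; lia.
    rewrite zposE /uu.
    transitivity ((1 + v + v ^+ 2) * (1 - v)^-1 * ((uu v)^-1 * (1 + v)) * (1 + v) ^+ k * v).
      by rewrite /uu !exprS; ring.
    by rewrite e1; ring.
- case: i hc hPhi hi => [m|m] hc hPhi hi; last by lia.
  apply: eqS.
  rewrite (_ : Posz m + 2 = Posz m.+2); last by lia.
  rewrite !zposE !addE oneE subE !mulE powS divE; last first.
    by rewrite mul0c expr0c subc addc hv mulf_neq0 // expf_neq0.
  rewrite /FF (_ : Posz m + 1 = Posz m.+1); last by lia.
  rewrite !GG_pos /CC /ww.
  rewrite invrM ?unitrX // -exprVn.
  have hw : 1 - v * (uu v)^-1 = (uu v)^-1.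
    transitivity ((uu v)^-1 * (1 + v) - v * (uu v)^-1); first by rewrite e1.
    by ring.
  rewrite /uu in hw *.
  transitivity ((1 + v + v ^+ 2) * (1 - v)^-1 * (1 + v)^-1 * (v * (1 + v)^-1) ^+ m *
    (1 - v * (1 + v)^-1)); first by rewrite (exprS _ m); ring.
  by rewrite hw !exprS exprMn; ring.
Qed.
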